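(* Suppose $h=h^{(0)}::h^{(1)}$ is the concatenation of two constant $\ell$-bit streams and $x$ is a uniformly distributed $\ell$-bit stream. Then (a) $G(h\vdash x\boxplus h)_\ell=2^{|\kappa h|-\ell}$; (b) $G(x,h\vdash x\boxplus h)=G(x^{\circledast\kappa h},h\vdash x\boxplus h)$.
   Context: For $x\in\mathbb{Z}_2^\ell$ and $h=h^{(0)}::h^{(1)}$ with $h^{(0)},h^{(1)}\in\mathbb{Z}_2^\ell$, $(x\boxplus h)_i=h^{(x_i)}_i$. The kernel is $\kappa h=\{i\mid h^{(0)}_i=h^{(1)}_i\}$. For $I\subseteq\{0,\dots,\ell-1\}$, $x^{\circledast I}$ is the string obtained from $x$ by replacing each bit $x_i$, $i\in I$, by a wildcard symbol $\circledast$. $G(\Xi\vdash\Theta)$ is the guessing chance: the maximal (over randomized guessing functions) fraction of random choices of the random values (here $x$) for which the function outputs $\Theta$ on input $\Xi$, as a sequence in $\ell$ considered up to negligible difference. *)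

(* Defs.v *)
From HB Require Import structures.
From mathcomp Require Import all_boot all_order all_algebra.
From mathcomp Require Import boolp classical_sets reals.
Set Implicit Arguments. Unset Strict Implicit. Unset Printing Implicit Defensive.
Import Order.TTheory GRing.Theory Num.Theory.
Local Open Scope ring_scope.
Local Open Scope classical_set_scope.

Definition bits (l : nat) := {ffun 'I_l -> bool}.

(* h = h0 :: h1, represented as the pair (h0, h1) *)
Definition boxplus (l : nat) (x : bits l) (h : bits l * bits l) : bits l :=
  [ffun i => if x i then h.2 i else h.1 i].

Definition kernel (l : nat) (h : bits l * bits l) : {set 'I_l} :=
  [set i | h.1 i == h.2 i].

Definition wildcard (l : nat) (x : bits l) (I : {set 'I_l}) : {ffun 'I_l -> option bool} :=
  [ffun i => if i \in I then None else Some (x i)].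

Definition is_distr (R : realType) (O : finType) (d : {ffun O -> R}) : Prop :=
  (forall o, 0 <= d o) /\ \sum_o d o = 1.

Definition rguesser (R : realType) (I O : finType) (f : I -> {ffun O -> R}) : Prop :=
  forall i, is_distr (f i).

(* success probability of guesser f, with the random value x uniform over X,
   input Xi x and target Th x *)
Definition success (R : realType) (X I O : finType)
  (Xi : X -> I) (Th : X -> O) (f : I -> {ffun O -> R}) : R :=
  (#|X|%:R)^-1 * \sum_x f (Xi x) (Th x).

(* guessing chance G(Xi |- Th): maximal success probability over all
   randomized guessing functions (supremum; it is attained) *)
Definition guess_chance (R : realType) (X I O : finType)
  (Xi : X -> I) (Th : X -> O) : R :=
  sup [set success Xi Th f | f in [set f | rguesser f]].

(* Main.v *)
Require Import Defs.
From HB Require Import structures.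
From mathcomp Require Import all_boot all_order all_algebra.
From mathcomp Require Import boolp classical_sets reals.
Import Order.TTheory GRing.Theory Num.Theory.
Local Open Scope ring_scope.
Set Implicit Arguments. Unset Strict Implicit.

Section S.
Variable R : realType.

Lemma sup_max (S : set R) m : S m -> (forall s, S s -> s <= m) -> sup S = m.
Proof.
move=> Sm ub; apply/eqP; rewrite eq_le; apply/andP; split.
  by apply: ge_sup; [exists m|].
by apply: sup_upper_bound => //; split; [exists m| exists m].
Qed.

Lemma distr_le1 (O : finType) (d : {ffun O -> R}) o : is_distr d -> d o <= 1.
Proof.
move=> [d0 d1]; rewrite -d1 (bigD1 o) //= lerDl; exact: sumr_ge0.
Qed.

Lemma success_le1 (X I O : finType) (Xi : X -> I) (Th : X -> O) (f : I -> {ffun O -> R}) :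
  rguesser f -> success Xi Th f <= 1.
Proof.
move=> gf; rewrite /success.
have [->|nz] := eqVneq #|X| 0%N; first by rewrite invr0 mul0r.
have hp : 0 < (#|X|%:R : R) by rewrite ltr0n lt0n.
rewrite ler_pdivrMl // mulr1.
apply: le_trans (_ : \sum_(x : X) (1 : R) <= _).
  by apply: ler_sum => x _; apply: distr_le1.
by rewrite sumr_const.
Qed.

Definition pm (I O : finType) (g : I -> O) : I -> {ffun O -> R} :=
  fun i => [ffun o => (o == g i)%:R].

Lemma pm_guesser (I O : finType) (g : I -> O) : rguesser (pm g).
Proof.
move=> i; split=> [o|]; first by rewrite ffunE ler0n.
rewrite (bigD1 (g i)) //= ffunE eqxx big1 ?addr0 // => o /negbTE.
by rewrite ffunE => ->.
Qed.

Lemma chance_one (X I O : finType) (Xi : X -> I) (Th : X -> O) (g : I -> O) :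
  (0 < #|X|)%N -> (forall x, g (Xi x) = Th x) -> @guess_chance R _ _ _ Xi Th = 1.
Proof.
move=> Xn hg; apply: sup_max.
  exists (pm g); first exact: pm_guesser.
  rewrite /success (eq_bigr (fun _ => 1)); last by move=> x _; rewrite ffunE hg eqxx.
  by rewrite sumr_const mulVf // pnatr_eq0 -lt0n.
by move=> s [f gf <-]; apply: success_le1.
Qed.

Lemma card_bits l : #|bits l| = (2 ^ l)%N.
Proof. by rewrite card_ffun card_bool card_ord. Qed.

Lemma partb l (h : bits l * bits l) :
  @guess_chance R _ _ _ (fun x : bits l => (x, h)) (fun x : bits l => boxplus x h)
    = @guess_chance R _ _ _ (fun x : bits l => (wildcard x (kernel h), h))
                            (fun x : bits l => boxplus x h).
Proof.
rewrite (@chance_one _ _ _ _ _ (fun p => boxplus p.1 p.2)) ?card_bits ?expn_gt0 //.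
rewrite (@chance_one _ _ _ _ _ (fun p : {ffun 'I_l -> option bool} * (bits l * bits l) =>
   [ffun i => match p.1 i with None => p.2.1 i | Some b => if b then p.2.2 i else p.2.1 i end]))
   ?card_bits ?expn_gt0 //.
move=> x /=; apply/ffunP => i; rewrite !ffunE inE.
by case: ifP => // /eqP ->; case: (x i).
Qed.

Definition Fc l (K : {set 'I_l}) (c : bits l) : forall i : 'I_l, pred bool :=
  fun i => if i \in K then predT else pred1 (c i).

Lemma card_Fc l K (c : bits l) : #|(family (Fc K c) : simpl_pred (bits l))| = (2 ^ #|K|)%N.
Proof.
rewrite card_family foldrE big_map big_enum /=.
rewrite (eq_bigr (fun i => if i \in K then 2%N else 1%N)); last first.
  by move=> i _; rewrite /Fc; case: ifP => _; [rewrite card_bool | rewrite card1].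
by rewrite -big_mkcond /= prod_nat_const.
Qed.

Lemma fiber_le l (h : bits l * bits l) (y : bits l) :
  (#|[pred x : bits l | boxplus x h == y]| <= 2 ^ #|kernel h|)%N.
Proof.
rewrite -(card_Fc (kernel h) [ffun i => y i == h.2 i]).
set F := family _.
have : [pred x : bits l | boxplus x h == y] \subset F; last exact: subset_leq_card.
apply/fintype.subsetP => x; rewrite /F inE => /eqP <-.
apply/familyP => i; rewrite /Fc !ffunE inE.
case: ifP => [_|/negbT hk]; rewrite !inE /= //.
by case: (x i); rewrite ?eqxx // (negbTE hk).
Qed.

Lemma fiber_ge l (h : bits l * bits l) (z : bits l) :
  (2 ^ #|kernel h| <= #|[pred x : bits l | boxplus x h == boxplus z h]|)%N.
Proof.
rewrite -(card_Fc (kernel h) z).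
set F := family _.
have : F \subset [pred x : bits l | boxplus x h == boxplus z h]; last exact: subset_leq_card.
apply/fintype.subsetP => x; rewrite /F => /familyP hx; rewrite inE.
apply/eqP/ffunP => i; rewrite !ffunE; have := hx i; rewrite /Fc inE.
case: (h.1 i == h.2 i) /eqP => [e _|_]; first by rewrite e; case: ifP; case: ifP.
by rewrite inE => /eqP ->.
Qed.

Lemma sum_fiber l (h : bits l * bits l) (d : {ffun bits l -> R}) :
  \sum_(x : bits l) d (boxplus x h) =
  \sum_(y : bits l) d y * #|[pred x : bits l | boxplus x h == y]|%:R.
Proof.
rewrite (partition_big (fun x => boxplus x h) predT) //=.
apply: eq_bigr => y _.
rewrite (eq_bigr (fun _ => d y)); last by move=> x /eqP ->.
by rewrite sumr_const mulr_natr.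
Qed.

Lemma parta l (h : bits l * bits l) :
  @guess_chance R _ _ _ (fun x : bits l => h) (fun x : bits l => boxplus x h)
    = (2 : R) ^ (#|kernel h|%:Z - l%:Z).
Proof.
set k := #|kernel h|.
have -> : (2 : R) ^ (k%:Z - l%:Z) = ((2 ^ l)%N%:R)^-1 * (2 ^ k)%N%:R.
  rewrite expfzDr ?pnatr_eq0 // -exprnN !natrX mulrC.
  by rewrite -[(2:R) ^ k%:Z]/((2:R) ^+ k) -exprVn.
have fe (y : bits l) : (#|[pred x : bits l | boxplus x h == y]| <= 2 ^ k)%N by apply: fiber_le.
set z : bits l := [ffun=> false].
have f0 : #|[pred x : bits l | boxplus x h == boxplus z h]| = (2 ^ k)%N.
  by apply/eqP; rewrite eqn_leq fe fiber_ge.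
apply: sup_max.
  exists (pm (fun _ : bits l * bits l => boxplus z h)); first exact: pm_guesser.
  rewrite /success card_bits; congr (_ * _).
  rewrite (sum_fiber h (pm (fun _ : bits l * bits l => boxplus z h) h)).
  rewrite (bigD1 (boxplus z h)) //= ffunE eqxx mul1r f0 big1 ?addr0 // => y /negbTE.
  by rewrite ffunE => ->; rewrite mul0r.
move=> s [f gf <-]; rewrite /success card_bits.
rewrite ler_pM2l ?invr_gt0 ?ltr0n ?expn_gt0 // sum_fiber.
have [d0 d1] := gf h.
apply: le_trans (_ : \sum_y f h y * (2 ^ k)%N%:R <= _).
  apply: ler_sum => y _; apply: ler_wpM2l => //; by rewrite ler_nat.
by rewrite -mulr_suml d1 mul1r.
Qed.
End S.

Theorem proposition5p6 (R : realType) (l : nat) (h : bits l * bits l) :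
  @guess_chance R _ _ _ (fun x : bits l => h) (fun x : bits l => boxplus x h)
    = (2 : R) ^ (#|kernel h|%:Z - l%:Z)
  /\
  @guess_chance R _ _ _ (fun x : bits l => (x, h)) (fun x : bits l => boxplus x h)
    = @guess_chance R _ _ _ (fun x : bits l => (wildcard x (kernel h), h))
                            (fun x : bits l => boxplus x h).
Proof. by split; [apply: parta | apply: partb]. Qed.
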